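(* If $A$ is a principal ideal domain and $I$ is an ideal of $A$, then the quotient ring $A/I$ is a BL-ring.
   Context: For a commutative unitary ring $R$, its ideals $Id(R)$ form a residuated lattice $(Id(R),\cap,+,\otimes,\rightarrow,\{0\},R)$, ordered by inclusion, where $I+J$ is the ideal sum, $I\otimes J$ the ideal product, and $I\rightarrow J=(J:I)=\{x\in R: xI\subseteq J\}$. A BL-algebra is a residuated lattice satisfying prelinearity $(x\rightarrow y)\vee(y\rightarrow x)=1$ and divisibility $x\odot(x\rightarrow y)=x\wedge y$. A BL-ring is a commutative unitary ring whose lattice of ideals, with this structure, is a BL-algebra. *)

(* Defs.v *)
From HB Require Import structures.
From mathcomp Require Import all_boot all_order all_algebra.
From mathcomp Require Import generic_quotient ring_quotient.
Set Implicit Arguments. Unset Strict Implicit. Unset Printing Implicit Defensive.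
Import GRing.Theory.
Local Open Scope ring_scope.
Local Open Scope quotient_scope.

Definition is_ideal (R : comPzRingType) (I : R -> Prop) : Prop :=
  [/\ I 0, (forall x y, I x -> I y -> I (x + y)) & (forall a x, I x -> I (a * x))].

Definition ideal_eq (R : comPzRingType) (I J : R -> Prop) : Prop :=
  forall x, I x <-> J x.

Definition ideal_top (R : comPzRingType) : R -> Prop := fun _ => True.

Definition ideal_meet (R : comPzRingType) (I J : R -> Prop) : R -> Prop :=
  fun x => I x /\ J x.

Definition ideal_sum (R : comPzRingType) (I J : R -> Prop) : R -> Prop :=
  fun x => exists y z, [/\ I y, J z & x = y + z].

Definition ideal_prod (R : comPzRingType) (I J : R -> Prop) : R -> Prop :=
  fun x => exists s : seq (R * R),
    (forall p, p \in s -> I p.1 /\ J p.2) /\ x = \sum_(p <- s) p.1 * p.2.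

Definition ideal_res (R : comPzRingType) (I J : R -> Prop) : R -> Prop :=
  fun x => forall y, I y -> J (x * y).

(* BL-ring: Id(R) (a residuated lattice) satisfies prelinearity
   (I -> J) v (J -> I) = R and divisibility I (x) (I -> J) = I /\ J. *)
Definition BL_ring (R : comPzRingType) : Prop :=
  forall I J : R -> Prop, is_ideal I -> is_ideal J ->
    ideal_eq (ideal_sum (ideal_res I J) (ideal_res J I)) (@ideal_top R) /\
    ideal_eq (ideal_prod I (ideal_res I J)) (ideal_meet I J).

Definition principal_ideal_domain (A : idomainType) : Prop :=
  forall I : A -> Prop, is_ideal I ->
    exists a : A, ideal_eq I (fun x => exists r, x = r * a).

(* MathComp's {ideal_quot I} only allows proper ideals (nonzero rings); *)
(* we build the quotient as a comPzRingType to cover I = A as well.    *)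

HB.mixin Record isMulIdeal (R : comPzRingType) (S : R -> bool) := {
  pzideal_mul : forall a u, u \in S -> a * u \in S
}.

#[short(type="pzideal")]
HB.structure Definition PzIdeal (R : comPzRingType) :=
  {S of GRing.ZmodClosed R S & isMulIdeal R S}.

Section QuotRing.
Variables (R : comPzRingType) (I : pzideal R).

Definition quot_ring := Quotient.quot (I : zmodClosed R).

HB.instance Definition _ := Choice.on quot_ring.
HB.instance Definition _ := GRing.Zmodule.on quot_ring.
HB.instance Definition _ :=
  EqQuotient.on quot_ring.

Local Notation Q := quot_ring.

Definition qone : Q := lift_cst Q 1.
Definition qmul := lift_op2 Q *%R.

Canonical qpi_one_morph := PiConst qone.

Lemma qpi_mul : {morph \pi_Q : x y / x * y >-> qmul x y}.
Proof.
move=> x y; unlock qmul; apply/eqP; rewrite piE Quotient.equivE.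
rewrite -[_ * _](addrNK (x * repr (\pi_Q y))) -mulrBr.
rewrite -addrA -mulrBl rpredD //.
  by rewrite pzideal_mul // Quotient.idealrDE opprK reprK.
by rewrite mulrC pzideal_mul // Quotient.idealrDE opprK reprK.
Qed.
Canonical qpi_mul_morph := PiMorph2 qpi_mul.

Lemma qmulA : associative qmul.
Proof. by move=> x y z; rewrite -[x]reprK -[y]reprK -[z]reprK !piE mulrA. Qed.

Lemma qmulC : commutative qmul.
Proof. by move=> x y; rewrite -[x]reprK -[y]reprK !piE mulrC. Qed.

Lemma qmul1 : left_id qone qmul.
Proof. by move=> x; rewrite -[x]reprK !piE mul1r. Qed.

Lemma qmulDl : left_distributive qmul +%R.
Proof.
move=> x y z; rewrite -[x]reprK -[y]reprK -[z]reprK.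
by apply/eqP; rewrite piE /= mulrDl Quotient.equivE subrr rpred0.
Qed.

HB.instance Definition _ := GRing.Zmodule_isComPzRing.Build quot_ring
  qmulA qmulC qmul1 qmulDl.

End QuotRing.

(* Main.v *)
Require Import Defs.
From mathcomp Require Import all_boot all_order all_algebra generic_quotient ring_quotient.
Import GRing.Theory.
Local Open Scope ring_scope.
Local Open Scope quotient_scope.

Section S.
Variables (A : idomainType) (I : pzideal A).
Local Notation Q := (quot_ring I).
Definition piQ (x : A) : Q := \pi_Q x.
Lemma piQD x y : piQ (x + y) = piQ x + piQ y.
Proof. by rewrite /piQ !piE. Qed.
Lemma piQ0 : piQ 0 = 0.
Proof. by rewrite /piQ !piE. Qed.
Lemma piQ1 : piQ 1 = 1.
Proof. by rewrite /piQ !piE. Qed.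
Lemma piQM x y : piQ (x * y) = piQ x * piQ y.
Proof. by rewrite /piQ qpi_mul. Qed.
Lemma piQK (z : Q) : piQ (repr z) = z.
Proof. by rewrite /piQ reprK. Qed.

Lemma pre_ideal (J : Q -> Prop) : is_ideal J -> is_ideal (fun x => J (piQ x)).
Proof.
case=> J0 JD JM; split; first by rewrite piQ0.
  by move=> x y Jx Jy; rewrite piQD; apply: JD.
by move=> a x Jx; rewrite piQM; apply: JM.
Qed.
End S.
Arguments piQ {A I}.
Arguments piQK {A I}.
Arguments piQM {A I}.
Arguments piQD {A I}.

Lemma pid_prelin (A : idomainType) : principal_ideal_domain A ->
  forall a b : A, exists u v, [/\ u + v = 1, exists k, u * a = k * b
                                & exists l, v * b = l * a].
Proof.
move=> hP a b.
pose L := fun x : A => exists s t, x = s * a + t * b.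
have iL : is_ideal L.
  split; first by exists 0, 0; rewrite !mul0r addr0.
    move=> x y [s [t ->]] [s' [t' ->]]; exists (s + s'), (t + t').
    by rewrite !mulrDl addrACA.
  move=> c x [s [t ->]]; exists (c * s), (c * t).
  by rewrite mulrDr !mulrA.
have [g hg] := hP L iL.
have [s [t gE]] : L g by apply/hg; exists 1; rewrite mul1r.
have [a' aE] : exists r, a = r * g by apply/hg; exists 1, 0; rewrite mul1r mul0r addr0.
have [b' bE] : exists r, b = r * g by apply/hg; exists 0, 1; rewrite mul1r mul0r add0r.
have [g0|gn0] := eqVneq g 0.
  exists 1, 0; split; first by rewrite addr0.
    by exists 0; rewrite aE g0 !mulr0 mul0r.
  by exists 0; rewrite !mul0r.
exists (t * b'), (s * a'); split.
- apply: (mulIf gn0); rewrite mul1r [RHS]gE aE bE.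
  by rewrite mulrDl addrC !mulrA.
- by exists (t * a'); rewrite aE bE !mulrA (mulrAC t b' a').
- by exists (s * b'); rewrite aE bE !mulrA (mulrAC s a' b').
Qed.

Theorem corollary3p8 (A : idomainType) (I : pzideal A) :
  principal_ideal_domain A -> BL_ring (quot_ring I).
Proof.
move=> hP J K iJ iK.
have [a ha] := hP _ (@pre_ideal _ _ _ iJ).
have [b hb] := hP _ (@pre_ideal _ _ _ iK).
have [J0 JD JM] := iJ; have [K0 KD KM] := iK.
have Ja : J (piQ a) by apply/ha; exists 1; rewrite mul1r.
have Kb : K (piQ b) by apply/hb; exists 1; rewrite mul1r.
have Jrepr : forall y, J y -> exists s, y = piQ s * piQ a.
  move=> y Jy; have : J (piQ (repr y)) by rewrite piQK.
  by move/ha=> [s sE]; exists s; rewrite -piQM -sE piQK.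
split.
- move=> z; split=> // _.
  have [u [v [uv [k uk] [l vl]]]] := @pid_prelin _ hP a b.
  exists (z * piQ u), (z * piQ v); split.
  + move=> y /Jrepr [s ->]; rewrite mulrCA -mulrA -piQM uk piQM !mulrA.
    exact: KM.
  + move=> y Ky.
    have : K (piQ (repr y)) by rewrite piQK.
    move/hb=> [s sE]; rewrite -(piQK y) sE.
    rewrite piQM mulrCA -mulrA -piQM vl piQM !mulrA; exact: JM.
  + by rewrite -mulrDr -piQD uv piQ1 mulr1.
- move=> x; split.
  + move=> [s [hs ->]]; elim: s hs => [|p s IH] hs.
      by rewrite big_nil.
    have [IHJ IHK] : J (\sum_(p0 <- s) p0.1 * p0.2) /\ K (\sum_(p0 <- s) p0.1 * p0.2).
      by apply: IH => q qs; apply: hs; rewrite inE qs orbT.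
    have [Jp Rp] := hs p (mem_head _ _).
    rewrite big_cons; split.
      by apply: JD => //; rewrite mulrC; apply: JM.
    by apply: KD => //; rewrite mulrC; apply: Rp.
  + move=> [Jx Kx]; have [r xE] := Jrepr x Jx.
    exists [:: (piQ a, piQ r)]; split.
      move=> p; rewrite inE => /eqP -> /=; split=> //.
      move=> y /Jrepr [t ->]; rewrite mulrCA -xE; exact: KM.
    by rewrite big_seq1 /= mulrC.
Qed.
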